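(* Let $x,y\in\mathbf S^3$ be distinct, and let $w\in\mathbb{C}^3$ be any representative of $\pi_x(y)$. Then \[\frac{\langle w,w\rangle}{\|w\|^2}=-\frac{|\langle x,y\rangle|^2}{\|x\wedge y\|^2},\] for any representatives $x,y\in\mathbb{C}^3$.
   Context: On $\mathbb{C}^3$: $u\cdot v=\sum u_i\bar v_i$, $\|u\|=\sqrt{u\cdot u}$, $\langle u,v\rangle=u_0\bar v_0-u_1\bar v_1-u_2\bar v_2$, $\|u\wedge v\|^2=\|u\|^2\|v\|^2-|u\cdot v|^2$. $\mathbf S^3=\{u\in\mathbb P^2_{\mathbb C}:\langle u,u\rangle=0\}$. For $w$, $w^\perp=\{u:\langle u,w\rangle=0\}$ (a projective line). For $x\in\mathbf S^3$ and $y\in\mathbf S^3\setminus\{x\}$, $\pi_x(y)$ is the unique intersection point of the projective lines $x^\perp$ and $y^\perp$. *)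

(* Defs.v *)
(* C^3 is modelled as 'rV[C]_3 over an arbitrary
   numClosedFieldType C (the complex numbers are an instance). *)
From HB Require Import structures.
From mathcomp Require Import all_boot all_order all_algebra.
Set Implicit Arguments. Unset Strict Implicit. Unset Printing Implicit Defensive.
Import Order.TTheory GRing.Theory Num.Theory.
Local Open Scope ring_scope.

Definition hdot (C : numClosedFieldType) (u v : 'rV[C]_3) : C :=
  \sum_(i < 3) u 0 i * (v 0 i)^*.

Definition vnorm (C : numClosedFieldType) (u : 'rV[C]_3) : C :=
  sqrtC (hdot u u).

Definition lform (C : numClosedFieldType) (u v : 'rV[C]_3) : C :=
  u 0 0 * (v 0 0)^* - u 0 1 * (v 0 1)^* - u 0 2%:R * (v 0 2%:R)^*.

Definition wedge_norm2 (C : numClosedFieldType) (u v : 'rV[C]_3) : C :=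
  vnorm u ^+ 2 * vnorm v ^+ 2 - `|hdot u v| ^+ 2.

Definition repS3 (C : numClosedFieldType) (u : 'rV[C]_3) : Prop :=
  u != 0 /\ lform u u = 0.

Definition proj_eq (C : numClosedFieldType) (u v : 'rV[C]_3) : Prop :=
  exists c : C, c != 0 /\ v = c *: u.

(* w is a representative of pi_x(y), the intersection point of the
   projective lines x^perp and y^perp *)
Definition rep_pi (C : numClosedFieldType) (x y w : 'rV[C]_3) : Prop :=
  w != 0 /\ lform w x = 0 /\ lform w y = 0.

(* Main.v *)
Require Import Defs.
From HB Require Import structures.
From mathcomp Require Import all_boot all_order all_algebra ring.
Import Order.TTheory GRing.Theory Num.Theory.
Local Open Scope ring_scope.

Lemma ord3 (j : 'I_3) : j = 0 \/ j = 1 \/ j = 2%:R.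
Proof.
case: j => [[|[|[|]]]] //= H.
- by left; apply/val_inj.
- by right; left; apply/val_inj.
- by right; right; apply/val_inj.
Qed.

Lemma hdotE (C : numClosedFieldType) (u v : 'rV[C]_3) :
  hdot u v = u 0 0 * (v 0 0)^* + u 0 1 * (v 0 1)^* + u 0 2%:R * (v 0 2%:R)^*.
Proof.
rewrite /hdot !big_ord_recl big_ord0 addr0 addrA.
have e1 : lift ord0 (@ord0 1) = 1 :> 'I_3 by apply/val_inj.
have e2 : lift ord0 (lift ord0 (@ord0 0)) = 2%:R :> 'I_3 by apply/val_inj.
by rewrite e1 e2.
Qed.

Lemma cM (C : numClosedFieldType) (a b : C) : (a * b)^* = a^* * b^*.
Proof. exact: rmorphM. Qed.
Lemma cD (C : numClosedFieldType) (a b : C) : (a + b)^* = a^* + b^*.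
Proof. exact: rmorphD. Qed.
Lemma cN (C : numClosedFieldType) (a : C) : (- a)^* = - a^*.
Proof. exact: rmorphN. Qed.
Lemma cB (C : numClosedFieldType) (a b : C) : (a - b)^* = a^* - b^*.
Proof. exact: rmorphB. Qed.

Lemma sum3_eq0 (C : numClosedFieldType) (a b c : C) :
  a * a^* + b * b^* + c * c^* = 0 -> [/\ a = 0, b = 0 & c = 0].
Proof.
have p0 : forall z : C, 0 <= z * z^* by move=> z; rewrite -normCK exprn_ge0.
move/eqP; rewrite paddr_eq0 ?addr_ge0 // paddr_eq0 // => /andP[/andP[h0 h1] h2].
by move: h0 h1 h2; rewrite !mul_conjC_eq0 => /eqP -> /eqP -> /eqP ->.
Qed.

Lemma hdot_eq0 (C : numClosedFieldType) (u : 'rV[C]_3) : hdot u u = 0 -> u = 0.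
Proof.
rewrite hdotE => /sum3_eq0 [h0 h1 h2].
apply/rowP => j; rewrite mxE.
by case: (ord3 j) => [->|[->|->]].
Qed.

Lemma prop_lem (C : numClosedFieldType) (x y : 'rV[C]_3) (i : 'I_3) :
  x 0 i != 0 -> y != 0 -> (forall j, x 0 i * y 0 j = x 0 j * y 0 i) -> proj_eq x y.
Proof.
move=> xi yn0 h; exists (y 0 i / x 0 i); split.
  rewrite mulf_neq0 ?invr_eq0 //; apply/eqP => yi; move/eqP: yn0; apply.
  apply/rowP => j; rewrite mxE; move: (h j); rewrite yi mulr0 => /eqP.
  by rewrite mulf_eq0 (negbTE xi) => /eqP.
apply/rowP => j; rewrite mxE.
apply: (mulfI xi); rewrite h; field; exact: xi.
Qed.

Lemma lemC (R : comNzRingType) (w0 w1 w2 w0' w1' w2' v0 v1 v2 v0' v1' v2' : R) :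
  w1*v2 - w2*v1 = 0 -> w2*v0 - w0*v2 = 0 -> w0*v1 - w1*v0 = 0 ->
  w1'*v2' - w2'*v1' = 0 -> w2'*v0' - w0'*v2' = 0 -> w0'*v1' - w1'*v0' = 0 ->
  (w0*w0' - w1*w1' - w2*w2') * (v0*v0' + v1*v1' + v2*v2') =
  (v0*v0' - v1*v1' - v2*v2') * (w0*w0' + w1*w1' + w2*w2').
Proof.
move=> h1 h2 h3 h1' h2' h3'; apply/eqP; rewrite -subr_eq0.
have -> : (w0*w0' - w1*w1' - w2*w2') * (v0*v0' + v1*v1' + v2*v2') -
  (v0*v0' - v1*v1' - v2*v2') * (w0*w0' + w1*w1' + w2*w2') =
  2%:R * ((w0*v1 - w1*v0) * (w0'*v1') + (w1*v0) * (w0'*v1' - w1'*v0'))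
  - 2%:R * ((w2*v0 - w0*v2) * (w2'*v0') + (w0*v2) * (w2'*v0' - w0'*v2')) by ring.
rewrite h2 h3 h2' h3' !mul0r !mulr0 !addr0 !mulr0 subrr. by rewrite eqxx.
Qed.

Lemma key (R : comNzRingType) (x0 x1 x2 y0 y1 y2 w0 w1 w2 x0' x1' x2' y0' y1' y2' w0' w1' w2' : R) :
  w0*x0' - w1*x1' - w2*x2' = 0 -> w0*y0' - w1*y1' - w2*y2' = 0 ->
  w0'*x0 - w1'*x1 - w2'*x2 = 0 -> w0'*y0 - w1'*y1 - w2'*y2 = 0 ->
  x0*x0' - x1*x1' - x2*x2' = 0 -> y0*y0' - y1*y1' - y2*y2' = 0 ->
  (w0*w0' - w1*w1' - w2*w2') *
   ((x0*x0' + x1*x1' + x2*x2') * (y0*y0' + y1*y1' + y2*y2')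
    - (x0*y0' + x1*y1' + x2*y2') * (x0'*y0 + x1'*y1 + x2'*y2)) =
  - ((x0*y0' - x1*y1' - x2*y2') * (x0'*y0 - x1'*y1 - x2'*y2)) *
   (w0*w0' + w1*w1' + w2*w2').
Proof.
move=> hx hy hx' hy' hxx hyy.
pose v0 := x1'*y2' - x2'*y1'. pose v1 := x0'*y2' - x2'*y0'. pose v2 := x1'*y0' - x0'*y1'.
pose u0 := x1*y2 - x2*y1. pose u1 := x0*y2 - x2*y0. pose u2 := x1*y0 - x0*y1.
have -> : (x0*x0' + x1*x1' + x2*x2') * (y0*y0' + y1*y1' + y2*y2')
    - (x0*y0' + x1*y1' + x2*y2') * (x0'*y0 + x1'*y1 + x2'*y2) =
    v0*u0 + v1*u1 + v2*u2 by rewrite /v0 /v1 /v2 /u0 /u1 /u2; ring.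
have -> : - ((x0*y0' - x1*y1' - x2*y2') * (x0'*y0 - x1'*y1 - x2'*y2)) =
    (v0*u0 - v1*u1 - v2*u2) - (x0*x0' - x1*x1' - x2*x2') * (y0*y0' - y1*y1' - y2*y2')
  by rewrite /v0 /v1 /v2 /u0 /u1 /u2; ring.
rewrite hxx mul0r subr0; apply: lemC.
- have -> : w1*v2 - w2*v1 = x0' * (w0*y0' - w1*y1' - w2*y2') - y0' * (w0*x0' - w1*x1' - w2*x2')
    by rewrite /v1 /v2; ring.
  by rewrite hx hy !mulr0 subrr.
- have -> : w2*v0 - w0*v2 = - x1' * (w0*y0' - w1*y1' - w2*y2') + y1' * (w0*x0' - w1*x1' - w2*x2')
    by rewrite /v0 /v2; ring.
  by rewrite hx hy !mulr0 addr0.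
- have -> : w0*v1 - w1*v0 = - x2' * (w0*y0' - w1*y1' - w2*y2') + y2' * (w0*x0' - w1*x1' - w2*x2')
    by rewrite /v0 /v1; ring.
  by rewrite hx hy !mulr0 addr0.
- have -> : w1'*u2 - w2'*u1 = x0 * (w0'*y0 - w1'*y1 - w2'*y2) - y0 * (w0'*x0 - w1'*x1 - w2'*x2)
    by rewrite /u1 /u2; ring.
  by rewrite hx' hy' !mulr0 subrr.
- have -> : w2'*u0 - w0'*u2 = - x1 * (w0'*y0 - w1'*y1 - w2'*y2) + y1 * (w0'*x0 - w1'*x1 - w2'*x2)
    by rewrite /u0 /u2; ring.
  by rewrite hx' hy' !mulr0 addr0.
- have -> : w0'*u1 - w1'*u0 = - x2 * (w0'*y0 - w1'*y1 - w2'*y2) + y2 * (w0'*x0 - w1'*x1 - w2'*x2)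
    by rewrite /u0 /u1; ring.
  by rewrite hx' hy' !mulr0 addr0.
Qed.

Theorem lemma5p7 (C : numClosedFieldType) (x y w : 'rV[C]_3) :
  repS3 x -> repS3 y -> ~ proj_eq x y ->
  rep_pi x y w ->
  lform w w / vnorm w ^+ 2 = - (`|lform x y| ^+ 2 / wedge_norm2 x y).
Proof.
move=> [xn0 hxx] [yn0 hyy] npr [wn0 [hwx hwy]].
rewrite /wedge_norm2 /vnorm !sqrtCK !normCK.
have hw : hdot w w != 0 by apply/eqP => /hdot_eq0 /eqP; rewrite (negbTE wn0).
have hD : hdot x x * hdot y y - hdot x y * (hdot x y)^* != 0.
  apply/eqP; rewrite !hdotE !(cD, cM, conjCK).
  set x0 := x 0 0; set x1 := x 0 1; set x2 := x 0 2%:R.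
  set y0 := y 0 0; set y1 := y 0 1; set y2 := y 0 2%:R.
  move=> hD.
  have : (x1*y2 - x2*y1) * (x1*y2 - x2*y1)^* + (x2*y0 - x0*y2) * (x2*y0 - x0*y2)^*
     + (x0*y1 - x1*y0) * (x0*y1 - x1*y0)^* = 0.
    by apply: (etrans _ hD); rewrite !(cB, cM); ring.
  move=> /sum3_eq0 [/eqP u0 /eqP u1 /eqP u2].
  rewrite !subr_eq0 in u0 u1 u2.
  apply: npr.
  have [i xi] : exists i, x 0 i != 0.
    apply/existsP; apply: contraNT xn0; rewrite negb_exists => /forallP h.
    by apply/eqP/rowP => j; rewrite mxE; apply/eqP; rewrite -[_ == _]negbK h.
  apply: (@prop_lem _ _ _ _ xi yn0) => j.
  case: (ord3 i) => ei; [|case: ei => ei]; rewrite ei;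
    case: (ord3 j) => [->|[->|->]]; rewrite -/x0 -/x1 -/x2 -/y0 -/y1 -/y2 //.
  all: try by rewrite (eqP u0).
  all: try by rewrite (eqP u1).
  all: try by rewrite (eqP u2).
  all: try by rewrite -(eqP u0).
  all: try by rewrite -(eqP u1).
  all: try by rewrite -(eqP u2).
  all: try by rewrite mulrC (eqP u0) mulrC.
rewrite -mulNr; apply/eqP; rewrite eqr_div //; apply/eqP.
move: hwx hwy hxx hyy; rewrite /lform !hdotE !(cD, cB, cN, cM, conjCK).
move=> hwx hwy hxx hyy.
have hwx' := congr1 (fun z => z^*) hwx; have hwy' := congr1 (fun z => z^*) hwy.
move: hwx' hwy'; rewrite /= !(cD, cB, cN, cM, conjCK) conjC0 => hwx' hwy'.
by apply: key.
Qed.
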